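(* Let $a, A$ be real numbers with $a+3>0$ and $$\frac{a+3}{2}=\frac{2}{A+3},$$ let $b_1,\dots,b_N$ and $B_1,\dots,B_N$ be real numbers with $$\sqrt{\frac{2}{a+3}}\,(b_n+3)=\sqrt{\frac{2}{A+3}}\,(B_n+3)\qquad (n=1,\dots,N),$$ and let $\eta,\mathcal{E},\lambda_1,\dots,\lambda_N,L$ be real numbers. Consider the general polynomial potentials $$U(r)=\xi r^{a+1}+\sum_{n=1}^N\mu_n r^{b_n+1},\qquad V(\rho)=\eta\rho^{A+1}+\sum_{n=1}^N\lambda_n\rho^{B_n+1},$$ where the parameters of $U$ are related to those of $V$ by the replacements $\xi=-\mathcal{E}$ and $\mu_n=\lambda_n$ ($n=1,\dots,N$). Suppose $\theta$ satisfies the orbit equation for the potential $U$ with energy $E=-\eta$ and angular momentum $L$ on an open interval $I\subset(0,\infty)$. Then, with the coordinate transformation $r=\rho^{(A+3)/2}$, $\theta=\frac{A+3}{2}\phi$, i.e. with $$\phi(\rho)=\frac{2}{A+3}\,\theta\!\left(\rho^{(A+3)/2}\right),$$ the function $\phi$ satisfies the orbit equation for the potential $V$ with energy $\mathcal{E}$ and the same angular momentum $L$ on the interval $J=\{\rho>0:\rho^{(A+3)/2}\in I\}$.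
   Context: For a central potential $W$ on $(0,\infty)$, energy $E$ and angular momentum $L$, a differentiable function $\theta$ on an open interval $I\subset(0,\infty)$ is said to satisfy the (classical) orbit equation if for all $r\in I$ the quantity $E-\frac{L^2}{2r^2}-W(r)$ is positive and $$\frac{d\theta}{dr}=\frac{L/r^{2}}{\sqrt{2\left[E-\frac{L^{2}}{2r^{2}}-W(r)\right]}}.$$ The exponents $a,b_n,A,B_n$ are arbitrary real numbers (general polynomial potentials allow arbitrary real powers). *)

(* Defs.v *)
From Stdlib Require Import Reals Lra.
From Coquelicot Require Import Coquelicot.
Open Scope R_scope.

Fixpoint sum1N (f : nat -> R) (N : nat) : R :=
  match N with
  | O => 0
  | S k => sum1N f k + f (S k)
  end.

(* general polynomial potential  W(r) = c r^(e+1) + sum_{n=1}^N m_n r^(d_n+1)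
   (real exponents via Rpower, meaningful for r > 0) *)
Definition genpot (c e : R) (m d : nat -> R) (N : nat) (r : R) : R :=
  c * Rpower r (e + 1) + sum1N (fun n => m n * Rpower r (d n + 1)) N.

Definition open_int (lo : R) (hi : Rbar) (r : R) : Prop :=
  lo < r /\ Rbar_lt r hi.

Definition orbit_eq (W : R -> R) (E L : R) (I : R -> Prop) (theta : R -> R) : Prop :=
  forall r, I r ->
    0 < E - L ^ 2 / (2 * r ^ 2) - W r /\
    derivable_pt_lim theta r
      ((L / r ^ 2) / sqrt (2 * (E - L ^ 2 / (2 * r ^ 2) - W r))).

(* Main.v *)
Require Import Defs.
From Stdlib Require Import Reals Lra Lia Psatz.
From Coquelicot Require Import Coquelicot.
Open Scope R_scope.

Theorem mainTheorem1 (a A : R) (N : nat) (b B lam : nat -> R)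
  (eta calE L : R) (lo : R) (hi : Rbar) (theta : R -> R) :
  0 < a + 3 ->
  (a + 3) / 2 = 2 / (A + 3) ->
  (forall n : nat, (1 <= n <= N)%nat ->
     sqrt (2 / (a + 3)) * (b n + 3) = sqrt (2 / (A + 3)) * (B n + 3)) ->
  0 <= lo -> Rbar_lt lo hi ->
  orbit_eq (genpot (- calE) a lam b N) (- eta) L (open_int lo hi) theta ->
  orbit_eq (genpot eta A lam B N) calE L
    (fun rho => 0 < rho /\ open_int lo hi (Rpower rho ((A + 3) / 2)))
    (fun rho => 2 / (A + 3) * theta (Rpower rho ((A + 3) / 2))).
Proof.
  intros Ha Hrel Hb Hlo Hlh Horb rho [Hrho Hint].
  assert (HA : 0 < A + 3).
  { assert (P : 0 < 2 / (A + 3)) by (rewrite <- Hrel; lra).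
    destruct (Rtotal_order (A + 3) 0) as [h|[h|h]]; auto.
    - assert (/ (A+3) < 0) by (apply Rinv_lt_0_compat; lra).
      unfold Rdiv in P; nra.
    - rewrite h in P; unfold Rdiv in P; rewrite Rinv_0 in P; lra. }
  assert (H4 : (a+3)*(A+3) = 4).
  { replace 4 with (2/(A+3) * 2 * (A+3)) by (field; lra).
    rewrite <- Hrel. field. }
  set (k := (A + 3) / 2) in *.
  assert (Hk : 0 < k) by (unfold k; lra).
  assert (Ha1 : (a+1)*k = 2 - 2*k) by (unfold k; nra).
  assert (HB : forall n, (1 <= n <= N)%nat -> B n + 1 = k * (b n + 3) - 2).
  { intros n Hn. specialize (Hb n Hn).
    assert (E1 : 2/(a+3) = k).
    { unfold k. apply Rmult_eq_reg_r with ((a+3)*2); [| nra].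
      field_simplify; [nra | lra]. }
    assert (E2 : 2/(A+3) = / k) by (unfold k; field; lra).
    rewrite E1, E2, sqrt_inv in Hb.
    assert (sk : sqrt k * sqrt k = k) by (apply sqrt_sqrt; lra).
    assert (sp : 0 < sqrt k) by (apply sqrt_lt_R0; lra).
    assert (Hx : B n + 3 = sqrt k * (/ sqrt k * (B n + 3))) by (field; lra).
    rewrite <- Hb in Hx. rewrite <- sk. nra. }
  destruct (Horb _ Hint) as [Hpos Hder].
  set (t := ln rho).
  set (e1 := exp t).
  set (u := exp ((k - 1) * t)).
  assert (He1 : 0 < e1) by apply exp_pos.
  assert (Hu : 0 < u) by apply exp_pos.
  assert (Hrho1 : rho = e1) by (unfold e1, t; symmetry; apply exp_ln; auto).
  assert (Hrk : Rpower rho k = e1 * u).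
  { unfold Rpower, e1, u. rewrite <- exp_plus. f_equal. fold t. ring. }
  assert (Hrk1 : Rpower rho (k - 1) = u) by reflexivity.
  assert (Hq : Rpower rho (A + 1) = u * u).
  { unfold Rpower, u. rewrite <- exp_plus. f_equal. fold t. unfold k. field. }
  assert (RR : forall y, Rpower (Rpower rho k) y = exp (y * (k * t))).
  { intro y. unfold Rpower at 1. unfold Rpower at 1. rewrite ln_exp. reflexivity. }
  assert (Hp : Rpower (Rpower rho k) (a + 1) = / (u * u)).
  { rewrite RR. unfold u. rewrite <- exp_plus, <- exp_Ropp. f_equal.
    replace ((a + 1) * (k * t)) with ((a+1)*k*t) by ring. rewrite Ha1. ring. }
  assert (Hsum : forall M, (M <= N)%nat ->
     sum1N (fun n => lam n * Rpower (Rpower rho k) (b n + 1)) M =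
     / (u * u) * sum1N (fun n => lam n * Rpower rho (B n + 1)) M).
  { induction M as [|M IH]; intro HM; simpl.
    - ring.
    - rewrite IH by lia.
      assert (Hx : Rpower (Rpower rho k) (b (S M) + 1) = /(u*u) * Rpower rho (B (S M) + 1)).
      { rewrite RR. unfold Rpower, u. rewrite <- exp_plus, <- exp_Ropp, <- exp_plus.
        f_equal. fold t. rewrite (HB (S M)) by lia. ring. }
      rewrite Hx. ring. }
  set (SV := sum1N (fun n => lam n * Rpower rho (B n + 1)) N).
  set (EV := calE - L ^ 2 / (2 * rho ^ 2) - genpot eta A lam B N rho).
  assert (HUV : - eta - L ^ 2 / (2 * Rpower rho k ^ 2) - genpot (- calE) a lam b N (Rpower rho k)
                = EV / (u * u)).
  { unfold EV, genpot. rewrite Hsum by lia. fold SV. rewrite Hp, Hq, Hrk, Hrho1.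
    field. split; lra. }
  rewrite HUV in Hpos, Hder.
  assert (HEV : 0 < EV).
  { replace EV with (EV / (u*u) * (u*u)) by (field; lra). apply Rmult_lt_0_compat; [exact Hpos | nra]. }
  split; [exact HEV|].
  pose proof (derivable_pt_lim_power rho k Hrho) as D1.
  pose proof (derivable_pt_lim_comp _ _ _ _ _ D1 Hder) as D2.
  pose proof (derivable_pt_lim_scal _ (2 / (A + 3)) _ _ D2) as D3.
  match goal with |- derivable_pt_lim _ _ ?v => replace v with
    (2 / (A + 3) * (L / Rpower rho k ^ 2 / sqrt (2 * (EV / (u * u))) * (k * Rpower rho (k - 1)))) end.
  { exact D3. }
  replace (2 * (EV / (u * u))) with ((2 * EV) * (/ u * / u)) by (field; lra).
  rewrite sqrt_mult by (try apply Rmult_le_pos; try left; try apply Rinv_0_lt_compat; lra).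
  rewrite sqrt_square by (left; apply Rinv_0_lt_compat; lra).
  assert (0 < sqrt (2 * EV)) by (apply sqrt_lt_R0; lra).
  rewrite Hrk, Hrk1, Hrho1. unfold k. field. repeat split; lra.
Qed.
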